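(* Let $\phi$ be a topological flow on a compact metric space $(M,\mathrm{dist})$ having the oriented shadowing property. If $p\in\mathrm{Sing}(\phi)$ is Lyapunov stable, then $\bigcap_{n\ge1}\Omega^+(p,1/n)=\{p\}$; if $p\in\mathrm{Sing}(\phi)$ is Lyapunov unstable, then $\bigcap_{n\ge1}\Omega^-(p,1/n)=\{p\}$.
   Context: A topological flow is a continuous $\phi:\mathbb{R}\times M\to M$ with $\phi(0,x)=x$, $\phi(s+t,x)=\phi(s,\phi(t,x))$; $\mathrm{Sing}(\phi)$ is its set of fixed points. A singularity $p$ is Lyapunov stable if for every neighborhood $V$ of $p$ there is a neighborhood $U$ of $p$ with $\phi(t,x)\in V$ for all $t\ge0$, $x\in U$; Lyapunov unstable if the same holds for $t\le0$. A $d$-pseudotrajectory is a map $\xi:\mathbb{R}\to M$ with $\mathrm{dist}(\xi(t+s),\phi(s,\xi(t)))<d$ for all $t\in\mathbb{R}$, $s\in[0,1]$; $\mathrm{Ps}(d)$ is the set of them. $\mathrm{Rep}$ is the set of orientation-preserving homeomorphisms of $\mathbb{R}$. $\phi$ has the oriented shadowing property if for every $\varepsilon>0$ there is $d>0$ such that for every $\xi\in\mathrm{Ps}(d)$ there are $x\in M$, $h\in\mathrm{Rep}$ with $\mathrm{dist}(\xi(t),\phi(h(t),x))<\varepsilon$ for all $t$. $B(\varepsilon,p)$ is the open ball. For $p\in M$, $\varepsilon>0$: $\Omega^+(p,\varepsilon)=\{\xi(t): \xi\in\mathrm{Ps}(\varepsilon),\ \xi(0)\in B(\varepsilon,p),\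 t\ge0\}$ and $\Omega^-(p,\varepsilon)=\{\xi(t): \xi\in\mathrm{Ps}(\varepsilon),\ \xi(0)\in B(\varepsilon,p),\ t\le0\}$. *)

(* Defs.v *)
From HB Require Import structures.
From mathcomp Require Import all_boot all_order all_algebra.
From mathcomp Require Import all_classical all_reals all_analysis.
Set Implicit Arguments. Unset Strict Implicit. Unset Printing Implicit Defensive.
Import Order.TTheory GRing.Theory Num.Theory.
Import numFieldNormedType.Exports.
Local Open Scope classical_set_scope.
Local Open Scope ring_scope.

Section flows.
Context {R : realType} {M : metricType R}.

Definition is_flow (phi : R -> M -> M) : Prop :=
  continuous (fun q : R * M => phi q.1 q.2) /\
  (forall x, phi 0 x = x) /\
  (forall s t x, phi (s + t) x = phi s (phi t x)).

Definition Sing (phi : R -> M -> M) : set M := [set p | forall t, phi t p = p].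

Definition lyapunov_stable (phi : R -> M -> M) (p : M) : Prop :=
  forall V : set M, nbhs p V ->
    exists U : set M, nbhs p U /\ forall t x, 0 <= t -> U x -> V (phi t x).

Definition lyapunov_unstable (phi : R -> M -> M) (p : M) : Prop :=
  forall V : set M, nbhs p V ->
    exists U : set M, nbhs p U /\ forall t x, t <= 0 -> U x -> V (phi t x).

Definition pseudotraj (phi : R -> M -> M) (d : R) (xi : R -> M) : Prop :=
  forall t s, 0 <= s <= 1 -> mdist (xi (t + s)) (phi s (xi t)) < d.

Definition Rep (h : R -> R) : Prop :=
  (exists g : R -> R, cancel h g /\ cancel g h /\ continuous g) /\
  continuous h /\ {homo h : x y / x < y}.

Definition oriented_shadowing (phi : R -> M -> M) : Prop :=
  forall eps : R, 0 < eps -> exists d : R, 0 < d /\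
    forall xi : R -> M, pseudotraj phi d xi ->
      exists (x : M) (h : R -> R), Rep h /\
        forall t, mdist (xi t) (phi (h t) x) < eps.

Definition Omega_plus (phi : R -> M -> M) (p : M) (eps : R) : set M :=
  [set y | exists (xi : R -> M) (t : R),
     [/\ pseudotraj phi eps xi, mdist p (xi 0) < eps, 0 <= t & y = xi t]].

Definition Omega_minus (phi : R -> M -> M) (p : M) (eps : R) : set M :=
  [set y | exists (xi : R -> M) (t : R),
     [/\ pseudotraj phi eps xi, mdist p (xi 0) < eps, t <= 0 & y = xi t]].

End flows.

(* Main.v *)
Require Import Defs.
From HB Require Import structures.
From mathcomp Require Import all_boot all_order all_algebra.
From mathcomp Require Import all_classical all_reals all_analysis.
From mathcomp Require Import lra.
Import Order.TTheory GRing.Theory Num.Theory.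
Import numFieldNormedType.Exports.
Local Open Scope classical_set_scope.
Local Open Scope ring_scope.

Section aux.
Context {R : realType} {M : metricType R}.

Lemma nbhs_ball_ex (p : M) (U : set M) : nbhs p U ->
  exists2 d : R, 0 < d & forall z, mdist p z < d -> U z.
Proof.
move=> /nbhs_ballP [d d0 sub]; exists d => // z pz; apply: sub.
by rewrite ballEmdist.
Qed.

Lemma inv_nat_lt (k : R) : 0 < k -> exists n : nat, (0 < n)%N /\ (n%:R)^-1 < k.
Proof.
move=> k0; exists (Num.truncn k^-1).+1; split => //.
rewrite -{2}(invrK k) ltf_pV2 ?posrE ?invr_gt0 ?ltr0Sn //.
exact: truncnS_gt.
Qed.

Lemma dist_zero (p y : M) : (forall e : R, 0 < e -> mdist p y < e + e) -> y = p.
Proof.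
move=> H; apply/esym/mdist_positivity/eqP; rewrite eq_le mdist_ge0 andbT.
apply/ler_addgt0Pl => e e0; rewrite addr0.
have := H (e / 2); rewrite divr_gt0 // -splitr => /(_ isT) /ltW //.
Qed.

Lemma homo_le (h : R -> R) : {homo h : x y / x < y} ->
  forall x y, x <= y -> h x <= h y.
Proof.
move=> hh x y; rewrite le_eqVlt => /orP [/eqP -> //| /hh /ltW //].
Qed.

Lemma core (phi : R -> M -> M) (p : M) (sgn : R) :
  (forall s t x, phi (s + t) x = phi s (phi t x)) ->
  oriented_shadowing phi ->
  (forall V : set M, nbhs p V ->
    exists U : set M, nbhs p U /\ forall t x, 0 <= sgn * t -> U x -> V (phi t x)) ->
  (sgn = 1 \/ sgn = -1) ->
  forall e : R, 0 < e -> exists n : nat, (0 < n)%N /\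
    forall (xi : R -> M) (t : R), pseudotraj phi (n%:R)^-1 xi ->
      mdist p (xi 0) < (n%:R)^-1 -> 0 <= sgn * t -> mdist p (xi t) < e + e.
Proof.
move=> fl sh st hs e e0.
have [U [nU HU]] := st _ (nbhsx_ballx p e e0).
have [de de0 dU] := @nbhs_ball_ex p U nU.
pose dl := Num.min de e.
have dl0 : 0 < dl by rewrite lt_min de0 e0.
have [d [d0 Hd]] := sh (dl / 2) (divr_gt0 dl0 (ltr0Sn _ 1)).
have m0 : 0 < Num.min d (dl / 2) by rewrite lt_min d0 divr_gt0.
have [n [n0 nlt]] := @inv_nat_lt _ m0.
exists n; split => // xi t pxi p0 tpos.
have pxi' : pseudotraj phi d xi.
  move=> u s su; apply: (lt_trans (pxi u s su)).
  by move: nlt; rewrite lt_min => /andP[].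
have [x [h [[_ [_ hh]] Hsh]]] := Hd _ pxi'.
have nlt2 : (n%:R)^-1 < dl / 2 by move: nlt; rewrite lt_min => /andP[].
pose z := phi (h 0) x.
have Uz : U z.
  apply: dU; apply: (le_lt_trans (metric_triangle _ (xi 0) _)).
  apply: (lt_le_trans (ltrD p0 (Hsh 0))).
  apply: (le_trans (lerD (ltW nlt2) (lexx _))).
  by rewrite -splitr ge_min lexx.
have key : 0 <= sgn * (h t - h 0).
  case: hs tpos => ->; rewrite ?mul1r ?mulN1r.
    by move=> tp; rewrite subr_ge0; apply: homo_le.
  rewrite oppr_ge0 => tp; rewrite oppr_ge0 subr_le0; exact: homo_le.
have := HU _ _ key Uz; rewrite /z -fl subrK ballEmdist /= => Hb.
apply: (le_lt_trans (metric_triangle _ (phi (h t) x) _)).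
apply: ltrD => //; rewrite metric_sym.
apply: (lt_le_trans (Hsh t)).
have : dl <= e by rewrite ge_min lexx orbT.
move: dl0; clear; lra.
Qed.
End aux.

Lemma const_traj (R : realType) (M : metricType R) (phi : R -> M -> M) (p : M) (n : nat) :
  Sing phi p -> (0 < n)%N -> pseudotraj phi (n%:R)^-1 (fun _ => p) /\ mdist p p < (n%:R)^-1.
Proof.
move=> sp n0; rewrite mdistxx invr_gt0 ltr0n n0; split => // t s _.
by rewrite sp mdistxx invr_gt0 ltr0n.
Qed.

Theorem lemma4p1 (R : realType) (M : metricType R) (phi : R -> M -> M) :
  compact [set: M] -> is_flow phi -> oriented_shadowing phi ->
  forall p : M, Sing phi p ->
    (lyapunov_stable phi p ->
       \bigcap_(n in [set n : nat | (0 < n)%N]) Omega_plus phi p (n%:R)^-1 = [set p]) /\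
    (lyapunov_unstable phi p ->
       \bigcap_(n in [set n : nat | (0 < n)%N]) Omega_minus phi p (n%:R)^-1 = [set p]).
Proof.
move=> _ [_ [_ fl]] sh p sp; split => st; apply/seteqP; split.
- move=> y H; apply: dist_zero => e e0.
  have st' : forall V : set M, nbhs p V ->
    exists U : set M, nbhs p U /\ forall t x, 0 <= 1 * t -> U x -> V (phi t x).
    by move=> V /st [U [nU HU]]; exists U; split => // t x; rewrite mul1r; apply: HU.
  have [n [n0 Hn]] := @core _ _ phi p _ fl sh st' (or_introl erefl) e e0.
  have [xi [t [pxi p0 t0 ->]]] := H n n0.
  by apply: Hn => //; rewrite mul1r.
- move=> y -> n /= n0; have [pt pp] := @const_traj _ _ phi p n sp n0.
  by exists (fun _ => p), 0.
- move=> y H; apply: dist_zero => e e0.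
  have st' : forall V : set M, nbhs p V ->
    exists U : set M, nbhs p U /\ forall t x, 0 <= -1 * t -> U x -> V (phi t x).
    by move=> V /st [U [nU HU]]; exists U; split => // t x; rewrite mulN1r oppr_ge0; apply: HU.
  have [n [n0 Hn]] := @core _ _ phi p _ fl sh st' (or_intror erefl) e e0.
  have [xi [t [pxi p0 t0 ->]]] := H n n0.
  by apply: Hn => //; rewrite mulN1r oppr_ge0.
- move=> y -> n /= n0; have [pt pp] := @const_traj _ _ phi p n sp n0.
  by exists (fun _ => p), 0.
Qed.
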